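(* For every $\phi\in L^1(\mathbb{R}_+)$ with $\int_0^\infty\phi(x)\,dx = 1$, the summability method $S_\phi$ is stronger than $K$; that is, $K$ is the weakest among these summability methods.
   Context: $\mathbb{R}_+=[0,\infty)$; functions are complex-valued. For $f\in L^\infty(\mathbb{R}_+)$: $K(f)=\alpha$ means that $f(\cdot+s)$ converges as $s\to\infty$ to the constant $\alpha$ in the weak* topology of $L^\infty(\mathbb{R}_+)$; $\mathcal{D}(K)$ is the set of $f$ for which such a constant limit exists. $S_\phi(f) = \lim_{x\to\infty}\int_0^x f(t)\phi(x-t)\,dt$, with domain the $f$ for which the limit exists. $S$ is stronger than $S'$ if $\mathcal{D}(S')\subseteq\mathcal{D}(S)$ and $S=S'$ on $\mathcal{D}(S')$. *)

(* Defs.v *)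
From HB Require Import structures.
From mathcomp Require Import all_boot all_order all_algebra.
From mathcomp Require Import all_classical all_reals all_analysis.
From mathcomp Require Import complex.
Set Implicit Arguments. Unset Strict Implicit. Unset Printing Implicit Defensive.
Import Order.TTheory GRing.Theory Num.Theory numFieldNormedType.Exports.
Local Open Scope classical_set_scope.
Local Open Scope ring_scope.

Section Defs.
Variable R : realType.
Local Notation mu := (@lebesgue_measure R).

Definition Rnonneg : set R := `[0, +oo[%classic.

Definition cintegrable (D : set R) (f : R -> R[i]) : Prop :=
  mu.-integrable D (EFin \o (fun x => complex.Re (f x))) /\
  mu.-integrable D (EFin \o (fun x => complex.Im (f x))).

Definition cint (D : set R) (f : R -> R[i]) : R[i] :=
  Complex (\int[mu]_(x in D) complex.Re (f x)) (\int[mu]_(x in D) complex.Im (f x)).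

Definition Linfty_Rnonneg (f : R -> R[i]) : Prop :=
  measurable_fun Rnonneg (fun x => complex.Re (f x)) /\
  measurable_fun Rnonneg (fun x => complex.Im (f x)) /\
  exists M : R, {ae mu, forall x, Rnonneg x -> Num.sqrt (complex.Re (f x) ^+ 2 + complex.Im (f x) ^+ 2) <= M}.

Definition L1_Rnonneg (f : R -> R[i]) : Prop := cintegrable Rnonneg f.

Definition ccvg_pinfty (F : R -> R[i]) (a : R[i]) : Prop :=
  (complex.Re (F x) @[x --> +oo%R] --> (complex.Re a : R)) /\
  (complex.Im (F x) @[x --> +oo%R] --> (complex.Im a : R)).

(** K(f) = alpha : f(. + s) -> alpha weak* in L^oo(R_+) = (L^1(R_+))^*. *)
Definition K_sum (f : R -> R[i]) (alpha : R[i]) : Prop :=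
  forall g : R -> R[i], L1_Rnonneg g ->
    ccvg_pinfty (fun s => cint Rnonneg (fun t => f (t + s) * g t))
                (cint Rnonneg (fun t => alpha * g t)).

Definition S_sum (phi f : R -> R[i]) (alpha : R[i]) : Prop :=
  ccvg_pinfty (fun x => cint `[0, x]%classic (fun t => f t * phi (x - t))) alpha.

End Defs.
Arguments Rnonneg {R}.

(* Main.v *)
Require Import Defs.
From HB Require Import structures.
From mathcomp Require Import all_boot all_order all_algebra.
From mathcomp Require Import all_classical all_reals all_analysis.
From mathcomp Require Import complex.
From mathcomp Require Import measurable_realfun ring lra.
Import Order.TTheory GRing.Theory Num.Theory.
Local Open Scope classical_set_scope.
Local Open Scope ring_scope.

Module Helpers.
Import numFieldNormedType.Exports.
Section S.
Variable R : realType.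
Local Notation mu := (@lebesgue_measure R).

Lemma mrefl (c : R) : measurable_fun [set: R] (fun x => c - x).
Proof. exact: measurable_funB. Qed.

Lemma refl_measure (c : R) A : measurable A ->
  mu ((fun x => c - x) @^-1` A) = mu A.
Proof.
move=> mA.
change (pushforward mu ((fun x : R => c - x) : R -> measurableTypeR R) A = mu A).
apply/esym/lebesgue_measure_unique => //=; first exact: mrefl.
move=> _ X [[a b] _ <-].
rewrite /pushforward.
have -> : (fun x => c - x) @^-1` `]a, b]%classic = `[c - b, c - a[%classic.
  apply/seteqP; split => x /=; rewrite !in_itv /= ?andbT.
    by move=> /andP[ax xb]; rewrite lerBlDr -lerBlDl ltrBrDl -ltrBrDr ax xb.
  by move=> /andP[bx xa]; rewrite ltrBrDl -ltrBrDr lerBlDr -lerBlDl xa bx.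
rewrite !lebesgue_measure_itv /= !lte_fin. rewrite ltrD2l ltrN2 -!EFinD; case: ifP => // _.
by congr (_%:E); lra.
Qed.

Lemma mpre (c : R) D : measurable D -> measurable ((fun x => c - x) @^-1` D).
Proof. by move=> mD; rewrite -[X in measurable X]setTI; exact: mrefl. Qed.

Lemma mcomp (c : R) D (f : R -> \bar R) : measurable D -> measurable_fun D f ->
  measurable_fun ((fun x => c - x) @^-1` D) (fun x => f (c - x)).
Proof.
move=> mD mf; apply: (measurable_comp mD _ mf).
  by move=> _ [x Dx <-].
exact: measurable_funS (mrefl c).
Qed.

Lemma mcompR (c : R) D (f : R -> R) : measurable D -> measurable_fun D f ->
  measurable_fun ((fun x => c - x) @^-1` D) (fun x => f (c - x)).
Proof.
move=> mD mf; apply: (measurable_comp mD _ mf).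
  by move=> _ [x Dx <-].
exact: measurable_funS (mrefl c).
Qed.

Local Open Scope ereal_scope.
Lemma refl_ge0 (c : R) D (f : R -> \bar R) : measurable D -> measurable_fun D f ->
  (forall x, D x -> 0 <= f x) ->
  \int[mu]_(x in D) f x = \int[mu]_(x in (fun x => (c - x)%R) @^-1` D) f (c - x)%R.
Proof.
move=> mD mf f0.
have H := (@ge0_integral_pushforward _ _ (measurableTypeR R) (measurableTypeR R) R ((fun x : R => (c - x)%R) : R -> measurableTypeR R) (mrefl c) mu D f mD mf).
have f0' : {in D, forall y, 0 <= f y} by move=> x /set_mem; exact: f0.
transitivity (\int[pushforward mu ((fun x : R => (c - x)%R) : R -> measurableTypeR R)]_(y in D) f y); last exact: H f0'.
apply: eq_measure_integral; first exact: mrefl.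
move=> A mA AD; rewrite /= -(refl_measure c mA) //.
Qed.

Lemma refl_int (c : R) D (f : R -> \bar R) : measurable D -> measurable_fun D f ->
  \int[mu]_(x in D) f x = \int[mu]_(x in (fun x => (c - x)%R) @^-1` D) f (c - x)%R.
Proof.
move=> mD mf; rewrite integralE [RHS]integralE.
rewrite (@refl_ge0 c D _ mD); [|exact: measurable_funepos|by move=> x _; exact: funepos_ge0].
rewrite (@refl_ge0 c D _ mD); [|exact: measurable_funeneg|by move=> x _; exact: funeneg_ge0].
by congr (_ - _); apply: eq_integral => x _; rewrite !unlock.
Qed.
Local Close Scope ereal_scope.

Lemma refl_Rint (c : R) D (f : R -> R) : measurable D -> measurable_fun D f ->
  \int[mu]_(x in D) f x = \int[mu]_(x in (fun x => c - x) @^-1` D) f (c - x).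
Proof.
move=> mD mf; rewrite /Rintegral (@refl_int c D _ mD)//.
exact/measurable_EFinP.
Qed.

Lemma refl_integrable (c : R) D (f : R -> R) : measurable D ->
  mu.-integrable D (EFin \o f) ->
  mu.-integrable ((fun x => c - x) @^-1` D) (EFin \o (fun x => f (c - x))).
Proof.
move=> mD /integrableP[mf fi]; apply/integrableP; split.
  by apply/measurable_EFinP; apply: mcompR => //; exact/measurable_EFinP.
rewrite -(@refl_ge0 c D (fun x => `|(f x)%:E|%E) mD)//.
exact: measurableT_comp.
Qed.

Lemma ae_le_Rint D (f g : R -> R) : measurable D -> measurable_fun D f -> measurable_fun D g ->
  (forall x, D x -> 0 <= f x) -> (forall x, D x -> 0 <= g x) ->
  mu.-integrable D (EFin \o g) -> {ae mu, forall x, D x -> f x <= g x} ->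
  \int[mu]_(x in D) f x <= \int[mu]_(x in D) g x.
Proof.
move=> mD mf mg f0 g0 ig fg.
have Hle : (\int[mu]_(x in D) (f x)%:E <= \int[mu]_(x in D) (g x)%:E)%E.
  apply: ae_ge0_le_integral => //; try (by move=> x Dx /=; rewrite lee_fin ?f0 ?g0);
    try exact/measurable_EFinP.
have gfin : (\int[mu]_(x in D) (g x)%:E)%E \is a fin_num by apply: integrable_fin_num.
rewrite /Rintegral fine_le//.
rewrite ge0_fin_numE; last by apply: integral_ge0 => x Dx; rewrite lee_fin f0.
apply: le_lt_trans Hle _.
have g0i : (0 <= \int[mu]_(x in D) (g x)%:E)%E.
  by apply: integral_ge0 => x Dx; rewrite lee_fin g0.
by rewrite -ge0_fin_numE//; exact: gfin.
Qed.

Lemma subset_Rint A B (f : R -> R) : measurable A -> measurable B -> A `<=` B ->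
  measurable_fun B f -> (forall x, B x -> 0 <= f x) -> mu.-integrable B (EFin \o f) ->
  \int[mu]_(x in A) f x <= \int[mu]_(x in B) f x.
Proof.
move=> mA mB AB mf f0 ig.
have Hle : (\int[mu]_(x in A) (f x)%:E <= \int[mu]_(x in B) (f x)%:E)%E.
  apply: ge0_subset_integral => //; try (by move=> x Dx /=; rewrite lee_fin ?f0);
    exact/measurable_EFinP.
have gfin : (\int[mu]_(x in B) (f x)%:E)%E \is a fin_num by apply: integrable_fin_num.
rewrite /Rintegral fine_le//.
rewrite ge0_fin_numE; last by apply: integral_ge0 => x Dx; rewrite lee_fin f0 //; apply: AB.
apply: le_lt_trans Hle _.
have g0i : (0 <= \int[mu]_(x in B) (f x)%:E)%E.
  by apply: integral_ge0 => x Dx; rewrite lee_fin f0.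
by rewrite -ge0_fin_numE//; exact: gfin.
Qed.

Ltac itvs := apply/seteqP; split => u /=; rewrite ?in_itv /= ?andbT;
  (try move=> /andP[? ?]); (try (apply/andP; split)); lra.

Lemma S1 (x T : R) : (fun u => x - u) @^-1` `[0, x - T[%classic = `]T, x]%classic.
Proof. itvs. Qed.
Lemma S2 (x T : R) : (fun u => x - u) @^-1` `[x - T, x]%classic = `[0, T]%classic.
Proof. itvs. Qed.
Lemma S3 (T : R) : (fun u => T - u) @^-1` `[0, T]%classic = `[0, T]%classic.
Proof. itvs. Qed.
Lemma S6 (x : R) : `[0, x]%classic `<=` (fun u => x - u) @^-1` Rnonneg.
Proof. move=> u /=; rewrite /Rnonneg /= !in_itv /= ?andbT => /andP[? ?]; lra. Qed.
Lemma S5 (T : R) : `[0, T]%classic `<=` Rnonneg.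
Proof. move=> u /=; rewrite /Rnonneg /= !in_itv /= ?andbT => /andP[? ?]; lra. Qed.
Lemma S4 (x T : R) : 0 <= T -> T <= x ->
  `[0, x]%classic = `[0, x - T[%classic `|` `[x - T, x]%classic.
Proof.
move=> T0 Tx; apply/seteqP; split => u /=; rewrite !in_itv /=.
  move=> /andP[u0 ux]; case: (ltP u (x - T)) => H.
    by left; rewrite u0.
  by right; rewrite ux.
by case=> /andP[? ?]; apply/andP; split; lra.
Qed.

Lemma intZabs D (f : R -> R) (k : R) : measurable D -> mu.-integrable D (EFin \o f) ->
  mu.-integrable D (EFin \o (fun t => k * `|f t|)).
Proof.
move=> mD i; have := integrableZl mD k (integrable_norm i).
by apply: eq_integrable => // t _.
Qed.

Lemma mRnonneg : measurable (Rnonneg : set (measurableTypeR R)).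
Proof. exact: measurable_itv. Qed.

Lemma mitv (i : interval R) : measurable ([set` i] : set (measurableTypeR R)).
Proof. exact: measurable_itv. Qed.

Section Core.
Variables (h psi : R -> R) (M c : R).
Hypothesis mh : measurable_fun Rnonneg h.
Hypothesis hb : {ae mu, forall x, Rnonneg x -> `|h x| <= M}.
Hypothesis ipsi : mu.-integrable Rnonneg (EFin \o psi).

Lemma mpsi : measurable_fun Rnonneg psi.
Proof. apply/measurable_EFinP; exact: (measurable_int mu). Qed.

Lemma mpsix (x : R) : measurable_fun `[0, x]%classic (fun t => psi (x - t)).
Proof.
apply: (measurable_funS _ (S6 x)); first exact: (@mpre x _ mRnonneg).
exact: (@mcompR x _ _ mRnonneg mpsi).
Qed.

Lemma ipsix (x : R) : mu.-integrable `[0, x]%classic (EFin \o (fun t => psi (x - t))).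
Proof.
have K := @refl_integrable x _ _ mRnonneg ipsi.
apply: (integrableS _ _ _ K).
- exact: (@mpre x _ mRnonneg).
- exact: measurable_itv.
- exact: S6.
Qed.

Lemma mH (x : R) : measurable_fun `[0, x]%classic (fun t => h t * psi (x - t)).
Proof.
apply: measurable_funM; last exact: mpsix.
exact: measurable_funS mRnonneg (S5 x) mh.
Qed.

Lemma hbx (x : R) : {ae mu, forall t, `[0, x]%classic t ->
  `|h t * psi (x - t)| <= `|M| * `|psi (x - t)|}.
Proof.
apply: filterS hb; first exact: (ae_filter_ringOfSetsType mu).
move=> t Ht It; rewrite normrM ler_wpM2r //.
exact: le_trans (Ht (@S5 x t It)) (ler_norm M).
Qed.

Lemma iH (x : R) : mu.-integrable `[0, x]%classic (EFin \o (fun t => h t * psi (x - t))).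
Proof.
apply/integrableP; split; first by apply/measurable_EFinP; exact: mH.
have iM : mu.-integrable `[0, x]%classic (EFin \o (fun t => `|M| * `|psi (x - t)|)).
  by apply: intZabs; [exact: measurable_itv|exact: ipsix].
move/integrableP : iM => [_]; apply: le_lt_trans.
apply: ae_ge0_le_integral => //.
- apply: measurableT_comp => //; apply/measurable_EFinP; exact: mH.
- apply: measurableT_comp => //; apply/measurable_EFinP.
  apply: measurable_funM => //; apply: measurableT_comp => //; exact: mpsix.
- apply: filterS (hbx x); first exact: (ae_filter_ringOfSetsType mu).
  move=> t Ht It /=; rewrite lee_fin (le_trans (Ht It))//.
  exact: ler_norm.
Qed.

Lemma tail_bound (x T : R) : 0 <= T -> T <= x ->
  `| \int[mu]_(t in `[0, x - T[%classic) (h t * psi (x - t)) |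
    <= `|M| * \int[mu]_(t in `]T, +oo[%classic) `|psi t|.
Proof.
move=> T0 Tx.
have sub : `[0, x - T[%classic `<=` `[0, x]%classic.
  by move=> u /=; rewrite !in_itv /= => /andP[? ?]; apply/andP; split; lra.
have mA : measurable (`[0, x - T[%classic : set (measurableTypeR R)) by exact: mitv.
have iA : mu.-integrable `[0, x - T[%classic (EFin \o (fun t => h t * psi (x - t))).
  by apply: (integrableS _ mA sub (iH x)); apply: measurable_itv.
apply: le_trans (le_normr_Rintegral mA iA) _.
have iP : mu.-integrable `[0, x - T[%classic (EFin \o (fun t => `|psi (x - t)|)).
  apply: (integrableS (mitv _) mA sub).
  exact: integrable_norm (ipsix x).
have mP : measurable_fun `[0, x - T[%classic (fun t => `|psi (x - t)|).
  apply: measurableT_comp => //; exact: measurable_funS (mitv _) sub (mpsix x).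
apply: le_trans (@ae_le_Rint _ _ (fun t => `|M| * `|psi (x - t)|) mA _ _ _ _ _ _) _.
- apply: measurableT_comp => //; exact: measurable_funS (mitv _) sub (mH x).
- exact: measurable_funM.
- by [].
- by move=> t _; rewrite mulr_ge0.
- apply: (integrableS (mitv _) mA sub).
  by apply: intZabs; [exact: measurable_itv|exact: ipsix].
- apply: filterS (hbx x); first exact: (ae_filter_ringOfSetsType mu).
  by move=> t Ht It; apply: Ht; apply: sub.
rewrite RintegralZl //; apply: ler_wpM2l => //.
rewrite (@refl_Rint x _ _ mA mP) S1.
have -> : \int[mu]_(u in `]T, x]%classic) `|psi (x - (x - u))| =
    \int[mu]_(u in `]T, x]%classic) `|psi u|.
  by apply: eq_Rintegral => u _; congr (`|psi _|); ring.
have sub2 : `]T, x]%classic `<=` `]T, +oo[%classic.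
  by move=> u /=; rewrite !in_itv /= ?andbT => /andP[? ?]; lra.
have sub3 : `]T, +oo[%classic `<=` (Rnonneg : set R).
  by move=> u /=; rewrite /Rnonneg /= !in_itv /= ?andbT => ?; lra.
apply: (@subset_Rint _ _ _ (mitv _) (mitv _) sub2).
- apply: measurableT_comp => //; exact: measurable_funS mRnonneg sub3 mpsi.
- by move=> u _.
- have := integrableS mRnonneg (mitv _) sub3 (integrable_norm ipsi). by [].
Qed.

Definition gT (T : R) := (fun w => psi (T - w)) \_ `[0, T]%classic.

Lemma igT (T : R) : 0 <= T -> mu.-integrable Rnonneg (EFin \o gT T).
Proof.
move=> T0.
have := (integrable_mkcond _ (mitv `[0, T])).1 (ipsix T).
rewrite restrict_EFin => HH.
exact: (integrableS measurableT mRnonneg (@subsetT _ _) HH).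
Qed.

Lemma RnI (T : R) : 0 <= T -> (Rnonneg : set R) `&` `[0, T]%classic = `[0, T]%classic.
Proof. by move=> T0; apply/setIidr; exact: S5. Qed.

Lemma int_gT (T : R) : 0 <= T ->
  \int[mu]_(t in Rnonneg) gT T t = \int[mu]_(t in `[0, T]%classic) psi t.
Proof.
move=> T0; rewrite /gT -Rintegral_mkcondr RnI//.
have mpT : measurable_fun `[0, T]%classic psi.
  exact: measurable_funS mRnonneg (S5 T) mpsi.
rewrite [RHS](@refl_Rint T _ _ (mitv _) mpT) S3.
by [].
Qed.

Lemma J_eq (x T : R) : 0 <= T -> T <= x ->
  \int[mu]_(t in Rnonneg) (h (t + (x - T)) * gT T t) =
  \int[mu]_(t in `[x - T, x]%classic) (h t * psi (x - t)).
Proof.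
move=> T0 Tx.
have -> : \int[mu]_(t in Rnonneg) (h (t + (x - T)) * gT T t) =
    \int[mu]_(t in Rnonneg) (((fun t => h (t + (x - T)) * psi (T - t)) \_ `[0, T]%classic) t).
  by apply: eq_Rintegral => t _; rewrite /gT !patchE; case: ifP => _ //; rewrite mulr0.
rewrite -Rintegral_mkcondr RnI//.
have mG : measurable_fun `[0, T]%classic (fun t => h (t + (x - T)) * psi (T - t)).
  apply: measurable_funM; last exact: mpsix.
  apply: (measurable_comp mRnonneg _ mh).
    move=> _ [t It <-]; move: It; rewrite /Rnonneg /= !in_itv /= ?andbT => /andP[? ?]; lra.
  by apply: measurable_funD.
rewrite (@refl_Rint T _ _ (mitv _) mG) S3.
have subx : `[x - T, x]%classic `<=` `[0, x]%classic.
  by move=> u /=; rewrite !in_itv /= => /andP[? ?]; apply/andP; split; lra.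
have mHx : measurable_fun `[x - T, x]%classic (fun t => h t * psi (x - t)).
  exact: measurable_funS (mitv _) subx (mH x).
rewrite (@refl_Rint x _ _ (mitv _) mHx) S2.
by apply: eq_Rintegral => u _; congr (h _ * psi _); ring.
Qed.

Lemma tail_small (eps : R) : 0 < eps ->
  exists T, 0 <= T /\ \int[mu]_(t in `]T, +oo[%classic) `|psi t| < eps.
Proof.
move=> e0.
pose F := (fun t => `|psi t|) \_ (Rnonneg : set R).
have F0 : forall t, 0 <= F t by move=> t; rewrite /F patchE; case: ifP.
have mF : measurable_fun setT F.
  apply/(measurable_restrictT _ mRnonneg); apply: measurableT_comp => //; exact: mpsi.
have eqF : forall D, D `<=` Rnonneg ->
    (\int[mu]_(x in D) (F x)%:E = \int[mu]_(x in D) (`|psi x|)%:E)%E.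
  move=> D DR; apply: eq_integral => t /set_mem Dt; rewrite /F patchE mem_set//; exact: DR.
have Hc : (fun n : nat => (\int[mu]_(x in `[0%R, (n%:R : R)]%classic) (`|psi x|)%:E)%E) @ \oo -->
    (\int[mu]_(x in Rnonneg) (`|psi x|)%:E)%E.
  have := @ge0_cvgn_integral R mu F F0 mF.
  rewrite eqF //.
  by rewrite (_ : (fun n : nat => _) = (fun n : nat => (\int[mu]_(x in `[0%R, (n%:R : R)]%classic) (`|psi x|)%:E)%E)) //; apply/funext => n; apply: eqF; exact: S5.
have eL : (\int[mu]_(x in Rnonneg) (`|psi x|)%:E)%E = (\int[mu]_(x in Rnonneg) `|psi x|)%:E.
  rewrite /Rintegral fineK //.
  exact: (integrable_fin_num mRnonneg (integrable_norm ipsi)).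
rewrite eL in Hc; move/fine_cvgP : Hc => [_ Hc].
move/cvgrPdist_lt : Hc => /(_ eps e0) [N _ HN].
have := HN N (leqnn N) => /= HNN.
exists N%:R; split => //.
rewrite -(@Rintegral_itvB _ (fun t => `|psi t|) (BLeft 0) (BInfty _ false) N%:R).
- exact: le_lt_trans (ler_norm _) HNN.
- by have := integrable_norm ipsi.
- by rewrite bnd_simp.
- by [].
Qed.

Hypothesis hK : forall g : R -> R, mu.-integrable Rnonneg (EFin \o g) ->
  (\int[mu]_(t in Rnonneg) (h (t + s) * g t)) @[s --> +oo%R] -->
  c * \int[mu]_(t in Rnonneg) g t.

Theorem core :
  (\int[mu]_(t in `[0, x]%classic) (h t * psi (x - t))) @[x --> +oo%R] -->
  c * \int[mu]_(t in Rnonneg) psi t.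
Proof.
apply/cvgrPdist_lt => e e0.
pose K0 := `|M| + `|c| + 1.
have nM := normr_ge0 M; have nc := normr_ge0 c.
have K0p : 0 < K0 by rewrite /K0; lra.
have e2 : 0 < e / 2 by rewrite divr_gt0.
have eK : 0 < e / (2 * K0) by rewrite divr_gt0 // mulr_gt0.
have [T [T0 HT]] := @tail_small _ eK.
have HK := hK _ (@igT T T0); rewrite int_gT // in HK.
move/cvgrPdist_lt : HK => /(_ _ e2) [S [Sr HS]].
exists (`|S| + T); split; first exact: num_real.
move=> x Hx.
have nS := ler_norm S; have nS0 := normr_ge0 S.
have Tx : T <= x by lra.
have xS : S < x - T by lra.
have HJ := HS _ xS; rewrite J_eq // in HJ.
have iU := iH x; rewrite (@S4 x T T0 Tx) in iU.
have disj : [disjoint `[0, x - T[%classic & `[x - T, x]%classic].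
  rewrite /disj_set; apply/eqP/seteqP; split => u //=.
  by rewrite !in_itv/= => -[/andP[? ?] /andP[? ?]]; lra.
rewrite (@S4 x T T0 Tx) Rintegral_setU //; try exact: mitv.
set A := \int[mu]_(t in `[0, x - T[%classic) (h t * psi (x - t)).
set B := \int[mu]_(t in `[x - T, x]%classic) (h t * psi (x - t)).
set P1 := \int[mu]_(t in `[0, T]%classic) psi t.
set tail := \int[mu]_(t in `]T, +oo[%classic) `|psi t|.
have sub3 : `]T, +oo[%classic `<=` (Rnonneg : set R).
  by move=> u /=; rewrite /Rnonneg /= !in_itv /= ?andbT => ?; lra.
have HP := @Rintegral_itvB _ psi (BLeft 0) (BInfty _ false) T ipsi.
rewrite bnd_simp in HP; have {HP} HP := HP T0 isT.
set P2 := \int[mu]_(t in `]T, +oo[%classic) psi t in HP.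
have hP2 : `|P2| <= tail.
  apply: le_normr_Rintegral; first exact: mitv.
  exact: (integrableS mRnonneg (mitv _) sub3 ipsi).
have hA := @tail_bound x T T0 Tx; rewrite -/A -/tail in hA.
have tail0 : 0 <= tail by apply: Rintegral_ge0 => t _.
have h1 : `|c * P2| <= `|c| * tail by rewrite normrM ler_wpM2l.
have h3 : `|M| * tail + `|c| * tail <= K0 * tail.
  by rewrite /K0 !mulrDl mul1r; lra.
have h4 : K0 * tail < e / 2.
  have := HT; rewrite -(ltr_pM2l K0p) => H.
  by have <- : K0 * (e / (2 * K0)) = e / 2 by field; lra.
have -> : c * \int[mu]_(t in Rnonneg) psi t - (A + B) = (c * P1 - B) + c * P2 - A.
  have -> : \int[mu]_(t in Rnonneg) psi t = P1 + P2 by rewrite -HP addrC subrK.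
  ring.
have t1 := ler_normB ((c * P1 - B) + c * P2) A.
have t2 := ler_normD (c * P1 - B) (c * P2).
lra.
Qed.
End Core.
End S.

Lemma ReM (R : realType) (z w : R[i]) : complex.Re (z * w) = complex.Re z * complex.Re w - complex.Im z * complex.Im w.
Proof. by case: z => ? ?; case: w => ? ?. Qed.
Lemma ImM (R : realType) (z w : R[i]) : complex.Im (z * w) = complex.Re z * complex.Im w + complex.Im z * complex.Re w.
Proof. by case: z => ? ?; case: w => ? ?. Qed.
Lemma abs_Re (R : realType) (a b : R) : `|a| <= Num.sqrt (a ^+ 2 + b ^+ 2).
Proof. rewrite -sqrtr_sqr. apply: ler_wsqrtr. by rewrite lerDl sqr_ge0. Qed.


Lemma main_helper (R : realType) (phi : R -> R[i]) :
  L1_Rnonneg phi -> cint Rnonneg phi = 1 ->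
  forall (f : R -> R[i]), Linfty_Rnonneg f ->
  forall alpha : R[i], K_sum f alpha -> S_sum phi f alpha.
Proof.
move=> [ip iq] hphi f [ma [mb [M HM]]] alpha HK.
have [Hp1 Hq0] : \int[lebesgue_measure]_(x in Rnonneg) complex.Re (phi x) = 1 /\
    \int[lebesgue_measure]_(x in Rnonneg) complex.Im (phi x) = 0.
  by move: hphi; rewrite /cint => -[-> ->].
pose a := fun x => complex.Re (f x).
pose b := fun x => complex.Im (f x).
pose p := fun x => complex.Re (phi x).
pose q := fun x => complex.Im (phi x).
have hbA : {ae lebesgue_measure, forall x, Rnonneg x -> `|a x| <= M}.
  apply: filterS HM; first exact: (ae_filter_ringOfSetsType (@lebesgue_measure R)).
  by move=> x H Hx; apply: le_trans (H Hx); exact: abs_Re.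
have hbB : {ae lebesgue_measure, forall x, Rnonneg x -> `|b x| <= M}.
  apply: filterS HM; first exact: (ae_filter_ringOfSetsType (@lebesgue_measure R)).
  by move=> x H Hx; apply: le_trans (H Hx); rewrite addrC; exact: abs_Re.
have gC : forall g : R -> R, lebesgue_measure.-integrable Rnonneg (EFin \o g) ->
    L1_Rnonneg (fun t => ((g t)%:C)%C).
  move=> g ig; split => //=.
  exact: integrable0.
have KA : forall g : R -> R, lebesgue_measure.-integrable Rnonneg (EFin \o g) ->
    (\int[lebesgue_measure]_(t in Rnonneg) (a (t + s) * g t)) @[s --> +oo%R] -->
    complex.Re alpha * \int[lebesgue_measure]_(t in Rnonneg) g t.
  move=> g ig; have [H1 _] := HK _ (gC g ig).
  rewrite /cint /= in H1.
  have E2 : \int[lebesgue_measure]_(t in Rnonneg) complex.Re (alpha * ((g t)%:C)%C) =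
      complex.Re alpha * \int[lebesgue_measure]_(t in Rnonneg) g t.
    rewrite -RintegralZl //; last exact: mRnonneg.
    by apply: eq_Rintegral => t _; rewrite ReM /= mulr0 subr0.
  rewrite -E2.
  suff -> : (fun s => \int[lebesgue_measure]_(t in Rnonneg) (a (t + s) * g t)) =
    (fun s => \int[lebesgue_measure]_(t in Rnonneg) complex.Re (f (t + s) * ((g t)%:C)%C)) by [].
  by apply/funext => s; apply: eq_Rintegral => t _; rewrite ReM /= mulr0 subr0.
have KB : forall g : R -> R, lebesgue_measure.-integrable Rnonneg (EFin \o g) ->
    (\int[lebesgue_measure]_(t in Rnonneg) (b (t + s) * g t)) @[s --> +oo%R] -->
    complex.Im alpha * \int[lebesgue_measure]_(t in Rnonneg) g t.
  move=> g ig; have [_ H1] := HK _ (gC g ig).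
  rewrite /cint /= in H1.
  have E2 : \int[lebesgue_measure]_(t in Rnonneg) complex.Im (alpha * ((g t)%:C)%C) =
      complex.Im alpha * \int[lebesgue_measure]_(t in Rnonneg) g t.
    rewrite -RintegralZl //; last exact: mRnonneg.
    by apply: eq_Rintegral => t _; rewrite ImM /= mulr0 add0r.
  rewrite -E2.
  suff -> : (fun s => \int[lebesgue_measure]_(t in Rnonneg) (b (t + s) * g t)) =
    (fun s => \int[lebesgue_measure]_(t in Rnonneg) complex.Im (f (t + s) * ((g t)%:C)%C)) by [].
  by apply/funext => s; apply: eq_Rintegral => t _; rewrite ImM /= mulr0 add0r.
have Cap := @core R a p M (complex.Re alpha) ma hbA ip (KA).
have Caq := @core R a q M (complex.Re alpha) ma hbA iq (KA).
have Cbp := @core R b p M (complex.Im alpha) mb hbB ip (KB).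
have Cbq := @core R b q M (complex.Im alpha) mb hbB iq (KB).
split; rewrite /cint /=.
- have := cvgB Cap Cbq; move=> /(_ proper_pinfty_nbhs); rewrite Hp1 Hq0 mulr1 mulr0 subr0.
  suff -> : (fun x => \int[lebesgue_measure]_(t in `[0, x]%classic) complex.Re (f t * phi (x - t))) =
    (fun x => \int[lebesgue_measure]_(t in `[0, x]%classic) (a t * p (x - t)) -
              \int[lebesgue_measure]_(t in `[0, x]%classic) (b t * q (x - t))) by [].
  apply/funext => x; rewrite -RintegralB //;
    try exact: (@iH R a p M ma hbA ip x); try exact: (@iH R b q M mb hbB iq x).
  by apply: eq_Rintegral => t _; rewrite ReM.
- have := cvgD Caq Cbp; move=> /(_ proper_pinfty_nbhs); rewrite Hp1 Hq0 mulr1 mulr0 add0r.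
  suff -> : (fun x => \int[lebesgue_measure]_(t in `[0, x]%classic) complex.Im (f t * phi (x - t))) =
    (fun x => \int[lebesgue_measure]_(t in `[0, x]%classic) (a t * q (x - t)) +
              \int[lebesgue_measure]_(t in `[0, x]%classic) (b t * p (x - t))) by [].
  apply/funext => x; rewrite -RintegralD //;
    try exact: (@iH R a q M ma hbA iq x); try exact: (@iH R b p M mb hbB ip x).
  by apply: eq_Rintegral => t _; rewrite ImM.
Qed.

End Helpers.

Theorem corollary3p2 (R : realType) (phi : R -> R[i]) :
  L1_Rnonneg phi -> cint Rnonneg phi = 1 ->
  forall (f : R -> R[i]), Linfty_Rnonneg f ->
  forall alpha : R[i], K_sum f alpha -> S_sum phi f alpha.
Proof. exact: Helpers.main_helper. Qed.
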